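(* Let $\Phi,\Psi,S,T$ be finite sets and let $p(s,t,\varphi,\psi)$ be a state-consistent entangled joint distribution on $S\times T\times\Phi\times\Psi$, where the states $\varphi,\psi$ are independent with marginals $p(\varphi),p(\psi)$. Define $\widetilde p(s,t,\varphi,\psi)=p(s,t,\varphi)\,p(\psi)$, where $p(s,t,\varphi)=\sum_{\psi}p(s,t,\varphi,\psi)$. If $(s,t,\varphi,\psi)$ is distributed according to $\widetilde p$, then $t$ is independent of $(\varphi,\psi)$; specifically $\widetilde p(t,\varphi,\psi)=p(t)\,p(\varphi,\psi)$.
   Context: A joint distribution of $(s,t,\varphi,\psi)$ is: state-consistent if its $(\varphi,\psi)$-marginal equals $p(\varphi)p(\psi)$; disjoint if $\Pr\{\psi\mid\varphi,s\}=\Pr\{\psi\mid\varphi\}$ and $\Pr\{\varphi\mid\psi,t\}=\Pr\{\varphi\mid\psi\}$ (whenever the conditioning events have positive probability); classically generated if there exists a random variable $x$ independent of $(\varphi,\psi)$ such that $p(s,t\mid x,\varphi,\psi)=p(s\mid x,\varphi)\,p(t\mid x,\psi)$; entangled if it is disjoint and not classically generated. *)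

(* Defs.v *)
From mathcomp Require Import all_boot all_order all_algebra.
Set Implicit Arguments. Unset Strict Implicit. Unset Printing Implicit Defensive.
Import Order.TTheory GRing.Theory Num.Theory.
Local Open Scope ring_scope.

Section Joint.
Variables (R : realFieldType) (S T F P : finType).
(* F = Phi (states phi), P = Psi (states psi);  p s t phi psi *)
Variable p : S -> T -> F -> P -> R.

Definition is_joint_dist : Prop :=
  (forall s t f g, 0 <= p s t f g) /\
  \sum_(s : S) \sum_(t : T) \sum_(f : F) \sum_(g : P) p s t f g = 1.

Definition mPhi (f : F) : R := \sum_(s : S) \sum_(t : T) \sum_(g : P) p s t f g.
Definition mPsi (g : P) : R := \sum_(s : S) \sum_(t : T) \sum_(f : F) p s t f g.
Definition mT (t : T) : R := \sum_(s : S) \sum_(f : F) \sum_(g : P) p s t f g.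
Definition mPhiPsi (f : F) (g : P) : R := \sum_(s : S) \sum_(t : T) p s t f g.
Definition mPhiS (f : F) (s : S) : R := \sum_(t : T) \sum_(g : P) p s t f g.
Definition mPsiT (g : P) (t : T) : R := \sum_(s : S) \sum_(f : F) p s t f g.
Definition mPhiSPsi (f : F) (s : S) (g : P) : R := \sum_(t : T) p s t f g.
Definition mPsiTPhi (g : P) (t : T) (f : F) : R := \sum_(s : S) p s t f g.
Definition mSTPhi (s : S) (t : T) (f : F) : R := \sum_(g : P) p s t f g.

Definition state_consistent : Prop :=
  forall f g, mPhiPsi f g = mPhi f * mPsi g.

(* Pr{psi | phi, s} = Pr{psi | phi} and Pr{phi | psi, t} = Pr{phi | psi},
   whenever the conditioning events have positive probability *)
Definition disjoint : Prop :=
  (forall f s g, 0 < mPhiS f s ->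
     mPhiSPsi f s g / mPhiS f s = mPhiPsi f g / mPhi f) /\
  (forall g t f, 0 < mPsiT g t ->
     mPsiTPhi g t f / mPsiT g t = mPhiPsi f g / mPsi g).

(* There is a (finitely valued) random variable x, jointly distributed with
   (s,t,phi,psi) via q, such that the (s,t,phi,psi)-marginal of q is p,
   x is independent of (phi,psi), and
   p(s,t | x,phi,psi) = p(s | x,phi) p(t | x,psi)
   (whenever p(x,phi,psi) > 0). *)
Definition classically_generated : Prop :=
  exists (X : finType) (q : X -> S -> T -> F -> P -> R),
    (forall x s t f g, 0 <= q x s t f g) /\
    (forall s t f g, \sum_(x : X) q x s t f g = p s t f g) /\
    (let qX x := \sum_(s : S) \sum_(t : T) \sum_(f : F) \sum_(g : P) q x s t f g in
     let qFG f g := \sum_(x : X) \sum_(s : S) \sum_(t : T) q x s t f g in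
     let qXFG x f g := \sum_(s : S) \sum_(t : T) q x s t f g in
     let qXF x f := \sum_(s : S) \sum_(t : T) \sum_(g : P) q x s t f g in
     let qXG x g := \sum_(s : S) \sum_(t : T) \sum_(f : F) q x s t f g in
     let qXSF x s f := \sum_(t : T) \sum_(g : P) q x s t f g in
     let qXTG x t g := \sum_(s : S) \sum_(f : F) q x s t f g in
     (forall x f g, qXFG x f g = qX x * qFG f g) /\
     (forall x s t f g, 0 < qXFG x f g ->
        q x s t f g / qXFG x f g =
        (qXSF x s f / qXF x f) * (qXTG x t g / qXG x g))).

Definition entangled : Prop := disjoint /\ ~ classically_generated.

Definition ptilde (s : S) (t : T) (f : F) (g : P) : R := mSTPhi s t f * mPsi g.

End Joint.

(* Main.v *)
Require Import Defs.
From mathcomp Require Import all_boot all_order all_algebra.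
Import Order.TTheory GRing.Theory Num.Theory.
Local Open Scope ring_scope.

Theorem corollary4 (R : realFieldType) (S T F P : finType)
    (p : S -> T -> F -> P -> R) :
  is_joint_dist p -> state_consistent p -> entangled p ->
  forall (t : T) (f : F) (g : P),
    \sum_(s : S) ptilde p s t f g = mT p t * mPhiPsi p f g.
Proof.
move=> [p0 _] sc [[_ dj] _] t f g.
have Psi_sum : forall g', mPsi p g' = \sum_(t' : T) mPsiT p g' t'.
  by move=> g'; rewrite /mPsi /mPsiT exchange_big.
have key : forall g', mPsiTPhi p g' t f = mPsiT p g' t * mPhi p f.
  move=> g'.
  have ge0 : 0 <= mPsiT p g' t by rewrite /mPsiT; apply: sumr_ge0 => s _; apply: sumr_ge0 => f' _; exact: p0.
  case: (ltrP 0 (mPsiT p g' t)) => [pos|le0].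
    have psipos : 0 < mPsi p g'.
      apply: (lt_le_trans pos); rewrite Psi_sum (bigD1 t) //= lerDl.
      by apply: sumr_ge0 => t' _; rewrite /mPsiT; apply: sumr_ge0 => s _; apply: sumr_ge0 => f' _; exact: p0.
    have := dj g' t f pos.
    have n0 : mPsi p g' != 0 by rewrite (gt_eqF psipos).
    have n1 : mPsiT p g' t != 0 by rewrite (gt_eqF pos).
    rewrite sc mulfK //.
    move=> e; by rewrite -e mulrC divfK.
  have z : mPsiT p g' t = 0 by apply/eqP; rewrite eq_le le0 ge0.
  rewrite z mul0r /mPsiTPhi big1 // => s _.
  move: z; rewrite /mPsiT => /psumr_eq0P z.
  have z1 := z (fun s' _ => sumr_ge0 _ (fun f' _ => p0 s' t f' g')) s isT.
  by move/psumr_eq0P: z1 => /(_ (fun f' _ => p0 s t f' g')) /(_ f isT).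
have eT : mT p t = \sum_(g' : P) mPsiT p g' t.
  rewrite /mT /mPsiT; under eq_bigr => s _ do rewrite exchange_big.
  by rewrite exchange_big.
have eA : \sum_(s : S) mSTPhi p s t f = \sum_(g' : P) mPsiTPhi p g' t f.
  by rewrite /mSTPhi /mPsiTPhi exchange_big.
rewrite /ptilde -mulr_suml eA (eq_bigr _ (fun g' _ => key g')) -mulr_suml -eT sc.
by rewrite mulrA.
Qed.
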